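(* Let $A,A^*$ be a Leonard pair in $\mathcal A$. Then there exists a unique antiautomorphism $\dagger$ of $\mathcal A$ (i.e. a $\mathbb K$-linear bijection $\mathcal A\to\mathcal A$ with $(XY)^\dagger=Y^\dagger X^\dagger$ for all $X,Y$) such that $A^\dagger=A$ and $A^{*\dagger}=A^*$. Moreover $X^{\dagger\dagger}=X$ for all $X\in\mathcal A$.
   Context: Let $\mathbb K$ be a field, $d\ge0$ an integer, and $\mathcal A$ a $\mathbb K$-algebra isomorphic to $\mathrm{Mat}_{d+1}(\mathbb K)$; let $V$ be an irreducible (left) $\mathcal A$-module (so $\dim V=d+1$). A square matrix is tridiagonal if every nonzero entry lies on the diagonal, subdiagonal or superdiagonal; a tridiagonal matrix is irreducible if all its subdiagonal and superdiagonal entries are nonzero. A Leonard pair in $\mathcal A$ is an ordered pair $A,A^*$ of elements of $\mathcal A$ such that (i) there is a basis of $V$ with respect to which the matrix representing $A$ is irreducible tridiagonal and the matrix representing $A^*$ is diagonal, and (ii) there is a basis of $V$ with respect to which the matrix representing $A$ is diagonal and the matrix representing $A^*$ is irreducible tridiagonal. *)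

(* Defs.v *)
From HB Require Import structures.
From mathcomp Require Import all_boot all_order all_algebra.
Set Implicit Arguments. Unset Strict Implicit. Unset Printing Implicit Defensive.
Import GRing.Theory.
Local Open Scope ring_scope.

(* We take the algebra A := 'M[K]_(d.+1) and its irreducible module
   V := 'cV[K]_(d.+1) (column vectors, A acting by left multiplication).
   A basis of V is given by the columns of an invertible matrix P; the matrix
   representing X in that basis is (invmx P) *m X *m P. *)

Definition tridiagonal (K : fieldType) (n : nat) (M : 'M[K]_n) : Prop :=
  forall i j : 'I_n, (i.+1 < j)%N \/ (j.+1 < i)%N -> M i j = 0.

Definition irred_tridiagonal (K : fieldType) (n : nat) (M : 'M[K]_n) : Prop :=
  tridiagonal M /\
  forall i j : 'I_n, (nat_of_ord j = i.+1)%N -> M i j != 0 /\ M j i != 0.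

Definition diagonal (K : fieldType) (n : nat) (M : 'M[K]_n) : Prop :=
  is_diag_mx M.

Definition leonard_pair (K : fieldType) (d : nat) (A As : 'M[K]_d.+1) : Prop :=
  (exists P : 'M[K]_d.+1, P \in unitmx /\
      irred_tridiagonal (invmx P *m A *m P) /\ diagonal (invmx P *m As *m P)) /\
  (exists Q : 'M[K]_d.+1, Q \in unitmx /\
      diagonal (invmx Q *m A *m Q) /\ irred_tridiagonal (invmx Q *m As *m Q)).

Definition antiautomorphism (K : fieldType) (n : nat) (f : 'M[K]_n -> 'M[K]_n) : Prop :=
  (forall (a : K) (X Y : 'M[K]_n), f (a *: X + Y) = a *: f X + f Y) /\
  bijective f /\
  (forall X Y : 'M[K]_n, f (X *m Y) = f Y *m f X).

(* Main.v *)
Require Import Defs.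
From HB Require Import structures.
From mathcomp Require Import all_boot all_order all_algebra.
From mathcomp Require Import zify.
Set Implicit Arguments. Unset Strict Implicit. Unset Printing Implicit Defensive.
Import GRing.Theory.
Local Open Scope ring_scope.

Section Gen.
Variables (K : fieldType) (n : nat).
Implicit Types (X Y : 'M[K]_n.+1).

Lemma aa_0 (g : 'M[K]_n.+1 -> 'M[K]_n.+1) :
  (forall (a : K) X Y, g (a *: X + Y) = a *: g X + g Y) -> g 0 = 0.
Proof.
move=> lin; have := lin 1 0 0; rewrite scale1r addr0 scale1r => e.
by apply/(addrI (g 0)); rewrite addr0 -e.
Qed.

Lemma aa_add (g : 'M[K]_n.+1 -> 'M[K]_n.+1) :
  (forall (a : K) X Y, g (a *: X + Y) = a *: g X + g Y) ->
  forall X Y, g (X + Y) = g X + g Y.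
Proof. by move=> lin X Y; rewrite -[X in X + _]scale1r lin scale1r. Qed.

Lemma aa_scale (g : 'M[K]_n.+1 -> 'M[K]_n.+1) :
  (forall (a : K) X Y, g (a *: X + Y) = a *: g X + g Y) ->
  forall a X, g (a *: X) = a *: g X.
Proof. by move=> lin a X; rewrite -[_ *: X]addr0 lin (aa_0 lin) addr0. Qed.

Lemma aa_1 (g : 'M[K]_n.+1 -> 'M[K]_n.+1) : antiautomorphism g -> g 1%:M = 1%:M.
Proof.
case=> _ [[h gh hg] mul].
by have := mul (h 1%:M) 1%:M; rewrite mulmx1 hg mulmx1 => <-.
Qed.

Lemma kernel_tri (T : 'M[K]_n.+1) (w : 'cV[K]_n.+1) (lam : K) :
  irred_tridiagonal T -> T *m w = lam *: w -> w ord0 0 = 0 -> w = 0.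
Proof.
move=> [tri irr] Tw w0.
suff H : forall k (m : 'I_n.+1), (m <= k)%N -> w m 0 = 0.
  by apply/matrixP => m z; rewrite (ord1 z) mxE (H m).
elim=> [|k IH] m.
  by rewrite leqn0 => /eqP m0; rewrite (_ : m = ord0) //; apply/val_inj.
rewrite leq_eqVlt ltnS => /orP [/eqP mk|]; last exact: IH.
have kn : (k < n.+1)%N by rewrite (leq_trans _ (ltn_ord m)) // mk.
set kk : 'I_n.+1 := Ordinal kn.
have := congr1 (fun M : 'cV[K]_n.+1 => M kk 0) Tw; rewrite !mxE (IH kk) // mulr0.
rewrite (bigD1 m) //= big1 ?addr0.
  by move/eqP; rewrite mulf_eq0 (negPf (irr kk m mk).1) /= => /eqP.
move=> l lm; case: (leqP l k) => lk; first by rewrite (IH l lk) mulr0.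
rewrite tri ?mul0r //; left => /=.
move: lm; rewrite -(inj_eq val_inj) /= mk => lm; lia.
Qed.
End Gen.

Section Gen2.
Variables (K : fieldType) (n : nat).

Lemma delta_sandwich (M : 'M[K]_n.+1) i j :
  delta_mx i i *m M *m delta_mx j j = M i j *: delta_mx i j.
Proof.
apply/matrixP => a b; rewrite !mxE (bigD1 j) //= big1 ?addr0; last first.
  by move=> k /negPf kj; rewrite !mxE kj andFb mulr0.
rewrite !mxE eqxx /= (bigD1 i) //= big1 ?addr0; last first.
  by move=> k /negPf ki; rewrite !mxE ki andbF mul0r.
rewrite !mxE eqxx andbT.
by case: (a == i); case: (b == j); rewrite /= ?mul1r ?mulr1 ?mul0r ?mulr0.
Qed.

Lemma prod_diag (I : eqType) (r : seq I) (P : pred I) (v : I -> 'rV[K]_n.+1) :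
  \prod_(k <- r | P k) diag_mx (v k) = diag_mx (\row_m \prod_(k <- r | P k) v k 0 m).
Proof.
elim: r => [|k r IH].
  rewrite !big_nil; apply/matrixP => a b; rewrite !mxE big_nil.
  by case: (a == b).
rewrite big_cons; case Pk: (P k); rewrite IH; first rewrite -mulmxE mulmx_diag;
  congr (diag_mx _); apply/rowP => m; by rewrite !mxE big_cons Pk.
Qed.

Lemma gen (T D : 'M[K]_n.+1) (S : 'M[K]_n.+1 -> Prop) :
 irred_tridiagonal T -> is_diag_mx D -> (forall i j : 'I_n.+1, i != j -> D i i != D j j) ->
 S 1%:M -> (forall X Y, S X -> S Y -> S (X + Y)) -> (forall a X, S X -> S (a *: X)) ->
 (forall X Y, S X -> S Y -> S (X *m Y)) -> S T -> S D -> forall X, S X.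
Proof.
move=> [tri irr] /is_diag_mxP Dd Ddist S1 Sadd Sscale Smul ST SD.
have S0 : S 0 by rewrite -(scale0r 1%:M); apply: (Sscale).
have Sprod : forall (I : finType) (P : pred I) F,
    (forall i, P i -> S (F i)) -> S (\prod_(i | P i) F i).
  move=> I P F HF; apply: (big_ind S) => //.
have Sdiag : forall i, S (delta_mx i i).
  move=> i.
  pose F k := (D i i - D k k)^-1 *: (D - (D k k)%:M).
  have -> : delta_mx i i = \prod_(k | k != i) F k.
    have eF : forall k, F k = diag_mx (\row_m ((D i i - D k k)^-1 * (D m m - D k k))).
      move=> k; apply/matrixP => a b; rewrite !mxE.
      case: (eqVneq a b) => [->|ab]; first by rewrite !mulr1n.
      rewrite (Dd a b) ?mulr0n ?subr0 ?mulr0 //.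
    rewrite (eq_bigr _ (fun k _ => eF k)) prod_diag.
    apply/matrixP => a b; rewrite !mxE.
    case: (eqVneq a b) => [->|ab]; last first.
      rewrite mulr0n; case: (a =P i) => [ai|] //=; case: (b =P i) => [bi|] //=.
      by rewrite ai bi eqxx in ab.
    rewrite andbb mulr1n; case: (eqVneq b i) => [->|bi].
      rewrite big1 // => k ki; rewrite !mxE mulVf //.
      by rewrite subr_eq0; apply: Ddist; rewrite eq_sym.
    rewrite (bigD1 b) //= !mxE subrr mulr0 mul0r.
    by [].
  apply: (Sprod) => k _; apply: (Sscale).
  by rewrite -scalemx1 -scaleNr; apply: (Sadd) => //; apply: (Sscale).
have Soff : forall (i j : 'I_n.+1), val j = (val i).+1 ->
    S (delta_mx i j) /\ S (delta_mx j i).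
  move=> i j e; have [Tij Tji] := irr i j e.
  split.
    have -> : delta_mx i j = (T i j)^-1 *: (delta_mx i i *m T *m delta_mx j j).
      by rewrite delta_sandwich scalerA mulVf // scale1r.
    by apply: (Sscale); apply: (Smul) => //; apply: (Smul).
  have -> : delta_mx j i = (T j i)^-1 *: (delta_mx j j *m T *m delta_mx i i).
    by rewrite delta_sandwich scalerA mulVf // scale1r.
  by apply: (Sscale); apply: (Smul) => //; apply: (Smul).
have Sup : forall k (i j : 'I_n.+1), val j = (i + k)%N ->
    S (delta_mx i j) /\ S (delta_mx j i).
  elim=> [|k IH] i j e.
    by rewrite addn0 in e; rewrite (_ : j = i) ?Sdiag //; apply/val_inj.
  have jk : (i + k < n.+1)%N by rewrite (leq_trans _ (ltn_ord j)) // e addnS.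
  set j' : 'I_n.+1 := Ordinal jk.
  have [IH1 IH2] := IH i j' erefl.
  have [O1 O2] := Soff j' j ltac:(by rewrite e addnS).
  by rewrite -(mul_delta_mx j' i j) -(mul_delta_mx j' j i); split; apply: (Smul).
move=> X; rewrite (matrix_sum_delta X).
apply: (big_ind S) => // a _; apply: (big_ind S) => // b _; apply: (Sscale).
case: (leqP a b) => ab.
  by have [] := Sup (b - a)%N a b (esym (subnKC ab)).
by have [] := Sup (a - b)%N b a (esym (subnKC (ltnW ab))).
Qed.
End Gen2.

Section Dist.
Variables (K : fieldType) (n : nat).

Lemma diag_e (D : 'M[K]_n.+1) k :
  (forall a b : 'I_n.+1, a != b :> nat -> D a b = 0) ->
  D *m (delta_mx k 0 : 'cV[K]_n.+1) = D k k *: delta_mx k 0.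
Proof.
move=> Dd; apply/matrixP => a b; rewrite (ord1 b) !mxE (bigD1 k) //= big1 ?addr0.
  rewrite !mxE !eqxx /= mulr1; case: (eqVneq a k) => [->|ak]; first by rewrite mulr1.
  rewrite mulr0 Dd //; apply: contra ak => /eqP e'; apply/eqP/val_inj.
by move=> l /negPf lk; rewrite !mxE lk /= mulr0.
Qed.

Lemma distinct_eig (P Q As : 'M[K]_n.+1) :
  P \in unitmx -> Q \in unitmx -> is_diag_mx (invmx P *m As *m P) ->
  irred_tridiagonal (invmx Q *m As *m Q) ->
  forall i j, i != j -> (invmx P *m As *m P) i i != (invmx P *m As *m P) j j.
Proof.
move=> Pu Qu /is_diag_mxP Dd Tirr i j ij; apply/negP => /eqP eqD.
move: Dd Tirr eqD.
set D := invmx P *m As *m P; set T := invmx Q *m As *m Q => Dd Tirr eqD.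
set R := invmx Q *m P.
have Ru : R \in unitmx by rewrite unitmx_mul unitmx_inv Qu Pu.
have TR : T *m R = R *m D.
  rewrite /T /R /D !mulmxA -[invmx Q *m As *m Q *m invmx Q]mulmxA mulmxV // mulmx1.
  by rewrite -[invmx Q *m P *m invmx P]mulmxA mulmxV // mulmx1.
pose e (k : 'I_n.+1) : 'cV[K]_n.+1 := delta_mx k 0.
have De : forall k, D *m e k = D k k *: e k.
  by move=> k; apply: diag_e.
pose u k := R *m e k.
have Tu : forall k, T *m u k = D k k *: u k.
  by move=> k; rewrite /u mulmxA TR -mulmxA De scalemxAr.
pose lam := D i i.
pose c1 := u j ord0 0; pose c2 := u i ord0 0.
pose w := c1 *: e i - c2 *: e j.
have Rw : R *m w = c1 *: u i - c2 *: u j by rewrite /w mulmxBr -!scalemxAr.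
have Tv : T *m (R *m w) = lam *: (R *m w).
  rewrite Rw mulmxBr -!scalemxAr !Tu /lam -eqD scalerBr !scalerA.
  by rewrite [lam * _]mulrC [lam * _]mulrC.
have v0 : (R *m w) ord0 0 = 0.
  by rewrite Rw /c1 /c2; move: (u i) (u j) => x y; rewrite !mxE mulrC subrr.
have Rw0 := kernel_tri Tirr Tv v0.
have w0 : w = 0.
  by rewrite -[w]mul1mx -(mulVmx Ru) -mulmxA Rw0 mulmx0.
have c20 : c2 = 0.
  have := congr1 (fun M : 'cV[K]_n.+1 => M j 0) w0.
  rewrite !mxE !eqxx eq_sym (negPf ij) /= !mulr0 mulr1 sub0r => /eqP.
  by rewrite oppr_eq0 => /eqP.
have ui0 := kernel_tri Tirr (Tu i) c20.
have : e i = 0.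
  by rewrite -[e i]mul1mx -(mulVmx Ru) -mulmxA -/(u i) ui0 mulmx0.
move/(congr1 (fun M : 'cV[K]_n.+1 => M i 0)); rewrite !mxE !eqxx /=.
by move/eqP; rewrite oner_eq0.
Qed.
End Dist.

Section Fdef.
Variables (K : fieldType) (n : nat).
Implicit Types (P H Hi X Y : 'M[K]_n.+1).

Definition fdef P H Hi X := P *m (Hi *m (invmx P *m X *m P)^T *m H) *m invmx P.

Lemma conjK P X : P \in unitmx -> P *m (invmx P *m X *m P) *m invmx P = X.
Proof.
move=> Pu; by rewrite !mulmxA mulmxV // mul1mx -mulmxA mulmxV // mulmx1.
Qed.

Lemma conjK' P X : P \in unitmx -> invmx P *m (P *m X *m invmx P) *m P = X.
Proof.
move=> Pu; by rewrite !mulmxA mulVmx // mul1mx -mulmxA mulVmx // mulmx1.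
Qed.

Lemma conjM P X Y : P \in unitmx ->
  P *m (X *m Y) *m invmx P = (P *m X *m invmx P) *m (P *m Y *m invmx P).
Proof.
move=> Pu; by rewrite !mulmxA -[P *m X *m invmx P *m P]mulmxA mulVmx // mulmx1.
Qed.

Lemma fdef_inv P H Hi : P \in unitmx -> Hi *m H = 1%:M -> H *m Hi = 1%:M ->
  H^T = H -> Hi^T = Hi -> involutive (fdef P H Hi).
Proof.
move=> Pu HiH HHi Ht Hit X; rewrite /fdef conjK' //.
rewrite !trmx_mul !trmxK Ht Hit !mulmxA -[P *m Hi *m H]mulmxA HiH mulmx1.
rewrite -[P *m invmx P *m X *m P *m Hi *m H]mulmxA HiH mulmx1.
by rewrite mulmxV // mul1mx -mulmxA mulmxV // mulmx1.
Qed.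

Lemma fdef_anti P H Hi : P \in unitmx -> Hi *m H = 1%:M -> H *m Hi = 1%:M ->
  H^T = H -> Hi^T = Hi -> antiautomorphism (fdef P H Hi).
Proof.
move=> Pu HiH HHi Ht Hit; split; [|split].
- move=> a X Y; rewrite /fdef.
  rewrite mulmxDr mulmxDl -scalemxAr -scalemxAl linearD /= linearZ /=.
  rewrite mulmxDr mulmxDl -scalemxAr -scalemxAl.
  by rewrite mulmxDr mulmxDl -scalemxAr -scalemxAl.
- exact: inv_bij (fdef_inv Pu HiH HHi Ht Hit).
- move=> X Y; rewrite /fdef.
  have -> : invmx P *m (X *m Y) *m P =
      (invmx P *m X *m P) *m (invmx P *m Y *m P).
    by rewrite !mulmxA -[invmx P *m X *m P *m invmx P]mulmxA mulmxV // mulmx1.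
  rewrite trmx_mul.
  set x := (invmx P *m X *m P)^T; set y := (invmx P *m Y *m P)^T.
  rewrite !mulmxA -[P *m Hi *m y *m H *m invmx P *m P]mulmxA mulVmx // mulmx1.
  by rewrite -[P *m Hi *m y *m H *m Hi]mulmxA HHi mulmx1.
Qed.
End Fdef.

Section Hf.
Variables (K : fieldType) (n : nat) (T : 'M[K]_n.+1).

Fixpoint hf k : K :=
  if k is k'.+1 then hf k' * T (inord k') (inord k'.+1) / T (inord k'.+1) (inord k')
  else 1.

Hypothesis Tirr : irred_tridiagonal T.

Lemma hf_neq0 k : (k < n.+1)%N -> hf k != 0.
Proof.
elim: k => [|k IH] kn /=; first exact: oner_neq0.
have kn' : (k < n.+1)%N by apply: ltnW.
have [a b] := Tirr.2 (inord k) (inord k.+1) ltac:(by rewrite !inordK).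
by rewrite mulf_neq0 ?invr_eq0 // mulf_neq0 // IH.
Qed.

Lemma hf_sym (i j : 'I_n.+1) : T j i * hf j = hf i * T i j.
Proof.
case: (eqVneq i j) => [->|ij]; first by rewrite mulrC.
have step : forall a b : 'I_n.+1, val b = (val a).+1 -> T b a * hf b = hf a * T a b.
  move=> a b e; rewrite e /=.
  have ea : inord a = a by rewrite inord_val.
  have eb : inord (a.+1) = b by apply: val_inj; rewrite /= inordK -e ?ltn_ord.
  rewrite ea eb; have [_ nz] := Tirr.2 a b e.
  by rewrite [LHS]mulrC divfK.
case: (eqVneq (val j) (val i).+1) => [e|ne1]; first by rewrite step.
case: (eqVneq (val i) (val j).+1) => [e|ne2]; first by rewrite [LHS]mulrC -(step j i e) mulrC.
have ij' : (i : nat) != j by [].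
move: ne1 ne2 => /= ne1 ne2.
rewrite !Tirr.1 ?mulr0 ?mul0r //; lia.
Qed.
End Hf.

Theorem theorem6p1 (K : fieldType) (d : nat) (A As : 'M[K]_d.+1) :
  leonard_pair A As ->
  exists f : 'M[K]_d.+1 -> 'M[K]_d.+1,
    [/\ antiautomorphism f, f A = A, f As = As,
        (forall g : 'M[K]_d.+1 -> 'M[K]_d.+1,
            antiautomorphism g -> g A = A -> g As = As -> forall X, g X = f X)
      & forall X, f (f X) = X].
Proof.
move=> [[P [Pu [Tirr Ddiag]]] [Q [Qu [_ Tirr']]]].
have Ddist := distinct_eig Pu Qu Ddiag Tirr'.
move: Tirr Ddiag Ddist.
set T := invmx P *m A *m P; set D := invmx P *m As *m P => Tirr Ddiag Ddist.
have eT : invmx P *m A *m P = T by [].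
have eD : invmx P *m As *m P = D by [].
clearbody T D.
pose H : 'M[K]_d.+1 := diag_mx (\row_(i < d.+1) hf T i).
pose Hi : 'M[K]_d.+1 := diag_mx (\row_(i < d.+1) (hf T i)^-1).
have HiH : Hi *m H = 1%:M.
  rewrite mulmx_diag; apply/matrixP => a b; rewrite !mxE.
  by rewrite mulVf ?hf_neq0 ?ltn_ord.
have HHi : H *m Hi = 1%:M.
  rewrite mulmx_diag; apply/matrixP => a b; rewrite !mxE.
  by rewrite mulfV ?hf_neq0 ?ltn_ord.
have Ht : H^T = H by rewrite tr_diag_mx.
have Hit : Hi^T = Hi by rewrite tr_diag_mx.
have TH : T^T *m H = H *m T.
  rewrite mul_mx_diag mul_diag_mx; apply/matrixP => a b; rewrite !mxE.
  exact: hf_sym.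
have [dv Dv] : exists dv, D = diag_mx dv by apply/diag_mxP.
pose f := fdef P H Hi.
have fanti : antiautomorphism f := fdef_anti Pu HiH HHi Ht Hit.
have finv : involutive f := fdef_inv Pu HiH HHi Ht Hit.
have fA : f A = A.
  rewrite /f /fdef eT -[Hi *m T^T *m H]mulmxA TH [Hi *m (H *m T)]mulmxA HiH mul1mx -eT.
  by rewrite conjK.
have fAs : f As = As.
  have HD : Hi *m D *m H = D.
    rewrite Dv !mulmx_diag; congr (diag_mx _); apply/rowP => a.
    by rewrite !mxE mulrC mulrA mulfV ?hf_neq0 ?ltn_ord ?mul1r.
  rewrite /f /fdef eD Dv tr_diag_mx -Dv HD -eD.
  by rewrite conjK.
exists f; split => // g ganti gA gAs.
pose S Y := g (P *m Y *m invmx P) = f (P *m Y *m invmx P).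
have Sall : forall Y, S Y.
  apply: (gen Tirr Ddiag Ddist).
  - by rewrite /S mulmx1 mulmxV // !aa_1.
  - move=> X Y; rewrite /S mulmxDr mulmxDl (aa_add ganti.1) (aa_add fanti.1).
    by move=> -> ->.
  - move=> a X; rewrite /S -scalemxAr -scalemxAl (aa_scale ganti.1) (aa_scale fanti.1).
    by move=> ->.
  - move=> X Y SX SY; rewrite /S conjM // ganti.2.2 fanti.2.2.
    by rewrite SX SY.
  - by rewrite /S -eT conjK // gA fA.
  - by rewrite /S -eD conjK // gAs fAs.
move=> X; have := Sall (invmx P *m X *m P); rewrite /S conjK //.
Qed.
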